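(* Let $(G,\cdot)$ be a group, let $A$ be an abelian subgroup of $G$, and let $\mathcal{A}=\{\psi\in\operatorname{End}(G):\psi(G)\le A\}$. For $\psi\in\mathcal{A}$ define $g\circ_\psi h=g\cdot\psi(g)\cdot h\cdot\psi(g)^{-1}$. Then $(\circ_\psi:\psi\in\mathcal{A})$ is a brace block on $G$.
   Context: A skew brace is a triple $(G,\cdot,\circ)$ where $(G,\cdot)$ and $(G,\circ)$ are groups and $g\circ(h\cdot k)=(g\circ h)\cdot g^{-1}\cdot(g\circ k)$ for all $g,h,k$ ($g^{-1}$ the inverse for $\cdot$). A bi-skew brace is a triple $(G,\cdot,\circ)$ such that both $(G,\cdot,\circ)$ and $(G,\circ,\cdot)$ are skew braces. A brace block on a set $G$ is a family $\mathcal{F}$ of group operations on $G$ such that $(G,\circ,\diamond)$ is a bi-skew brace for all $\circ,\diamond\in\mathcal{F}$. *)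

(* Defs.v *)
Set Implicit Arguments.
Unset Strict Implicit.

Definition is_group (T : Type) (op : T -> T -> T) : Prop :=
  (forall x y z, op x (op y z) = op (op x y) z) /\
  exists e : T,
    (forall x, op e x = x /\ op x e = x) /\
    (forall x, exists y, op x y = e /\ op y x = e).

Definition is_inverse (T : Type) (op : T -> T -> T) (g g' : T) : Prop :=
  forall e : T, (forall x, op e x = x /\ op x e = x) -> op g g' = e /\ op g' g = e.

Definition is_skew_brace (T : Type) (dot circ : T -> T -> T) : Prop :=
  is_group dot /\ is_group circ /\
  forall g ginv h k, is_inverse dot g ginv ->
    circ g (dot h k) = dot (dot (circ g h) ginv) (circ g k).

Definition is_bi_skew_brace (T : Type) (dot circ : T -> T -> T) : Prop :=
  is_skew_brace dot circ /\ is_skew_brace circ dot.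

Definition brace_block (T I : Type) (P : I -> Prop) (F : I -> T -> T -> T) : Prop :=
  forall i j, P i -> P j -> is_bi_skew_brace (F i) (F j).

Definition circ_psi (T : Type) (mul : T -> T -> T) (inv : T -> T)
  (psi : T -> T) (g h : T) : T :=
  mul (mul (mul g (psi g)) h) (inv (psi g)).

(* Main.v *)
Require Import Defs.
From Stdlib Require Import Setoid.

Ltac grp mA m1 m2 mV mV' K KV iM iK i1 :=
  repeat rewrite ?iM, ?iK, ?i1;
  repeat rewrite <- ?mA;
  repeat (rewrite ?K, ?KV, ?mV, ?mV', ?m1, ?m2).

Theorem mainTheorem7
  (T : Type) (mul : T -> T -> T) (inv : T -> T) (one : T)
  (mulA : forall x y z, mul x (mul y z) = mul (mul x y) z)
  (mul1g : forall x, mul one x = x) (mulg1 : forall x, mul x one = x)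
  (mulVg : forall x, mul (inv x) x = one) (mulgV : forall x, mul x (inv x) = one)
  (A : T -> Prop)
  (A1 : A one) (AM : forall x y, A x -> A y -> A (mul x y))
  (AV : forall x, A x -> A (inv x))
  (Acomm : forall x y, A x -> A y -> mul x y = mul y x) :
  brace_block
    (fun psi : T -> T =>
       (forall x y, psi (mul x y) = mul (psi x) (psi y)) /\ (forall x, A (psi x)))
    (fun psi => circ_psi mul inv psi).
Proof.
  assert (K : forall x y, mul (inv x) (mul x y) = y).
  { intros. rewrite mulA, mulVg, mul1g. reflexivity. }
  assert (KV : forall x y, mul x (mul (inv x) y) = y).
  { intros. rewrite mulA, mulgV, mul1g. reflexivity. }
  assert (uniqinv : forall x y, mul x y = one -> y = inv x).
  { intros x y H. rewrite <- (K x y), H, mulg1. reflexivity. }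
  assert (iM : forall x y, inv (mul x y) = mul (inv y) (inv x)).
  { intros. symmetry. apply uniqinv. rewrite <- mulA, (KV y). apply mulgV. }
  assert (iK : forall x, inv (inv x) = x).
  { intros. symmetry. apply uniqinv. apply mulVg. }
  assert (i1 : inv one = one).
  { symmetry; apply uniqinv; apply mul1g. }
  assert (commR : forall x y z, A x -> A y -> mul x (mul y z) = mul y (mul x z)).
  { intros. rewrite !mulA, (Acomm x y); auto. }
  assert (homfacts : forall psi : T -> T,
    (forall x y, psi (mul x y) = mul (psi x) (psi y)) -> (forall x, A (psi x)) ->
    psi one = one /\ (forall x, psi (inv x) = inv (psi x))).
  { intros psi pM pA.
    assert (p1 : psi one = one).
    { pose proof (pM one one) as H. rewrite mul1g in H.
      transitivity (mul (inv (psi one)) (mul (psi one) (psi one))); [symmetry; apply K | rewrite <- H; apply mulVg]. }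
    split; auto. intros x. apply uniqinv. rewrite <- pM, mulgV. auto. }
  assert (psicirc : forall psi phi : T -> T,
    (forall x y, psi (mul x y) = mul (psi x) (psi y)) -> (forall x, A (psi x)) ->
    (forall x y, phi (mul x y) = mul (phi x) (phi y)) -> (forall x, A (phi x)) ->
    forall g h, psi (circ_psi mul inv phi g h) = mul (psi g) (psi h)).
  { intros psi phi pM pA qM qA g h. unfold circ_psi.
    destruct (homfacts psi pM pA) as [p1 pI].
    rewrite !pM, pI. grp mulA mul1g mulg1 mulVg mulgV K KV iM iK i1. rewrite (commR (psi (phi g)) (psi h)); auto. grp mulA mul1g mulg1 mulVg mulgV K KV iM iK i1. reflexivity. }
  assert (grpc : forall psi : T -> T,
    (forall x y, psi (mul x y) = mul (psi x) (psi y)) -> (forall x, A (psi x)) ->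
    is_group (circ_psi mul inv psi) /\
    (forall x, circ_psi mul inv psi one x = x /\ circ_psi mul inv psi x one = x)).
  { intros psi pM pA.
    destruct (homfacts psi pM pA) as [p1 pI].
    assert (idn : forall x, circ_psi mul inv psi one x = x /\ circ_psi mul inv psi x one = x).
    { intros x; unfold circ_psi; rewrite p1; split; grp mulA mul1g mulg1 mulVg mulgV K KV iM iK i1; reflexivity. }
    split; auto. split.
    - intros x y z. pose proof (psicirc psi psi pM pA pM pA x y) as E. unfold circ_psi in *. rewrite E. grp mulA mul1g mulg1 mulVg mulgV K KV iM iK i1. reflexivity.
    - exists one. split; auto. intros x.
      exists (mul (mul (inv (psi x)) (inv x)) (psi x)). unfold circ_psi. split.
      + grp mulA mul1g mulg1 mulVg mulgV K KV iM iK i1. reflexivity.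
      + rewrite !pM, !pI. grp mulA mul1g mulg1 mulVg mulgV K KV iM iK i1.
        rewrite (commR (inv (psi (psi x))) (inv (psi x))); auto. grp mulA mul1g mulg1 mulVg mulgV K KV iM iK i1.
        rewrite (commR (inv (psi (psi x))) (psi x)); auto. grp mulA mul1g mulg1 mulVg mulgV K KV iM iK i1. reflexivity. }
  assert (skew : forall psi phi : T -> T,
    (forall x y, psi (mul x y) = mul (psi x) (psi y)) -> (forall x, A (psi x)) ->
    (forall x y, phi (mul x y) = mul (phi x) (phi y)) -> (forall x, A (phi x)) ->
    is_skew_brace (circ_psi mul inv psi) (circ_psi mul inv phi)).
  { intros psi phi pM pA qM qA.
    destruct (grpc psi pM pA) as [Gp Ip]. destruct (grpc phi qM qA) as [Gq Iq].
    split; [exact Gp|]. split; [exact Gq|].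
    intros g ginv h k Hinv.
    destruct (Hinv one Ip) as [H1 _].
    assert (pg : psi ginv = inv (psi g)).
    { apply uniqinv. rewrite <- (proj1 (homfacts psi pM pA)).
      rewrite <- H1, (psicirc psi psi pM pA pM pA). reflexivity. }
    assert (eg : ginv = mul (mul (inv (psi g)) (inv g)) (psi g)).
    { transitivity (mul (mul (inv (psi g)) (inv g)) (mul (circ_psi mul inv psi g ginv) (psi g))).
      { unfold circ_psi. grp mulA mul1g mulg1 mulVg mulgV K KV iM iK i1. reflexivity. }
      rewrite H1. grp mulA mul1g mulg1 mulVg mulgV K KV iM iK i1. reflexivity. }
    remember (circ_psi mul inv phi g h) as X.
    remember (circ_psi mul inv phi g k) as Z.
    assert (pX : psi X = mul (psi g) (psi h)) by (subst X; apply psicirc; auto).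
    pose proof (psicirc psi psi pM pA pM pA X ginv) as E1.
    subst X Z. unfold circ_psi in *. rewrite E1, pX, pg. rewrite eg.
    grp mulA mul1g mulg1 mulVg mulgV K KV iM iK i1.
    rewrite (commR (psi h) (inv (psi g))); auto. grp mulA mul1g mulg1 mulVg mulgV K KV iM iK i1.
    rewrite (commR (psi h) (phi g)); auto. grp mulA mul1g mulg1 mulVg mulgV K KV iM iK i1.
    rewrite (commR (psi g) (inv (psi h))); auto. grp mulA mul1g mulg1 mulVg mulgV K KV iM iK i1.
    rewrite (Acomm (inv (psi h)) (inv (phi g))); auto.
    }
  intros psi phi [pM pA] [qM qA]. split; apply skew; auto.
Qed.
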